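(* Let $t_1, t_2 \in \mathsf{Topo}$ and let $f: \mathsf{Addr}(t_1) \to \mathsf{Addr}(t_2)$ be an embedding. Then (1) if $t_1 = *$, then $t_2 = *$; and (2) if $t_1 = \mathsf{Node}(\vec t_1)$, then for each $1 \le i \le |\vec t_1|$ there exists an embedding $f_i$ of $t_1/i$ inside $t_2/f(i)$ satisfying $f(i\cdot\alpha) = f(i)\cdot f_i(\alpha)$ for all $\alpha \in \mathsf{Addr}(t_1/i)$.
   Context: Topologies: $\mathsf{Topo}$ is the smallest set with $*\in\mathsf{Topo}$ and $\mathsf{Node}(\vec t)\in\mathsf{Topo}$ for every $n\in\mathbb{N}$ and list $\vec t\in\mathsf{Topo}^n$ (entries $\vec t[i]$). Addresses: $\mathsf{Addr}(t)\subseteq\mathbb{N}^*$ is the smallest set with $\epsilon\in\mathsf{Addr}(t)$ and $i\cdot\alpha\in\mathsf{Addr}(\mathsf{Node}(\vec t))$ for $1\le i\le n$, $\alpha\in\mathsf{Addr}(\vec t[i])$. Subtrees: $t/\epsilon=t$, $\mathsf{Node}(\vec t)/(i\cdot\alpha)=\vec t[i]/\alpha$. An embedding of $t_1$ in $t_2$ is an injective $f:\mathsf{Addr}(t_1)\to\mathsf{Addr}(t_2)$ with $f(\epsilon)=\epsilon$; $t_2/f(\alpha)=*$ whenever $t_1/\alpha=*$; and for all $\alpha,\alpha'$, $\alpha$ is a prefix of $\alpha'$ iff $f(\alpha)$ is a prefix of $f(\alpha')$. *)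

(* Defs.v *)
From mathcomp Require Import all_boot.
Set Implicit Arguments. Unset Strict Implicit. Unset Printing Implicit Defensive.

Inductive topo : Type :=
| Leaf : topo
| Node : seq topo -> topo.

(* Addresses are sequences of (1-based) child indices. *)
Definition address := seq nat.

Definition child (ts : seq topo) (i : nat) : topo := nth Leaf ts i.-1.

Inductive is_addr : topo -> address -> Prop :=
| addr_nil : forall t, is_addr t [::]
| addr_cons : forall (ts : seq topo) (i : nat) (a : address),
    1 <= i <= size ts -> is_addr (child ts i) a -> is_addr (Node ts) (i :: a).

Fixpoint subtree (t : topo) (a : address) : option topo :=
  match a with
  | [::] => Some t
  | i :: a' =>
      match t with
      | Leaf => None
      | Node ts => if (1 <= i <= size ts) then subtree (child ts i) a' else None
      end
  end.

Definition is_prefix (a b : address) : Prop := exists c, b = a ++ c.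

(* f : Addr(t1) -> Addr(t2) is an embedding of t1 in t2 (f is given as a
   total function on addresses; only its values on Addr(t1) matter). *)
Definition embedding (t1 t2 : topo) (f : address -> address) : Prop :=
  [/\ (forall a, is_addr t1 a -> is_addr t2 (f a)),
      (forall a b, is_addr t1 a -> is_addr t1 b -> f a = f b -> a = b),
      f [::] = [::],
      (forall a, is_addr t1 a -> subtree t1 a = Some Leaf ->
                 subtree t2 (f a) = Some Leaf)
    & (forall a b, is_addr t1 a -> is_addr t1 b ->
                   (is_prefix a b <-> is_prefix (f a) (f b)))].

(* Main.v *)
Require Import Defs.
From mathcomp Require Import all_boot.

Lemma addr_subtree t a : is_addr t a <-> exists s, subtree t a = Some s.
Proof.
split.
- elim=> [t0|ts i a' Hi _ [s Hs]]; first by exists t0.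
  by exists s => /=; rewrite Hi.
- elim: a t => [|i a IH] t; first by move=> _; constructor.
  case: t => [|ts] /= [s]; first by [].
  case: ifP => // Hi Hs; constructor => //; apply: IH; by exists s.
Qed.

Lemma subtree_cat t p q :
  subtree t (p ++ q) = if subtree t p is Some s then subtree s q else None.
Proof.
elim: p t => [|i p IH] t //=.
case: t => // ts; case: ifP => // _; exact: IH.
Qed.

Lemma prefix_cons i a b : is_prefix a b <-> is_prefix (i :: a) (i :: b).
Proof.
split=> [[c ->]|[c [E]]]; [by exists c | by exists c].
Qed.

Lemma prefix_cat p a b : is_prefix a b <-> is_prefix (p ++ a) (p ++ b).
Proof.
split=> [[c ->]|[c E]]; first by exists c; rewrite catA.
exists c; move: E; rewrite -catA; by elim: p => [|x p IH] //= [] /IH.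
Qed.

Theorem lemma5p3 (t1 t2 : topo) (f : address -> address) :
  embedding t1 t2 f ->
  (t1 = Leaf -> t2 = Leaf) /\
  (forall ts1 : seq topo, t1 = Node ts1 ->
     forall i : nat, 1 <= i <= size ts1 ->
       exists s2 : topo, subtree t2 (f [:: i]) = Some s2 /\
       exists fi : address -> address,
         embedding (child ts1 i) s2 fi /\
         (forall a, is_addr (child ts1 i) a -> f (i :: a) = f [:: i] ++ fi a)).
Proof.
case=> Haddr Hinj H0 Hleaf Hpre; split.
  move=> E; subst t1.
  have := Hleaf [::] (addr_nil _) erefl; rewrite H0 /=; by case.
move=> ts1 E i Hi; subst t1.
have Hai : is_addr (Node ts1) [:: i] by constructor => //; constructor.
have [s2 Hs2] := proj1 (addr_subtree _ _) (Haddr _ Hai).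
exists s2; split => //.
have Hc a : is_addr (child ts1 i) a -> is_addr (Node ts1) (i :: a).
  by move=> Ha; constructor.
have Hdec a : is_addr (child ts1 i) a ->
    f (i :: a) = f [:: i] ++ drop (size (f [:: i])) (f (i :: a)).
  move=> Ha; have /(Hpre _ _ Hai (Hc _ Ha)) [c ->] : is_prefix [:: i] (i :: a)
    by exists a.
  by rewrite drop_size_cat.
set fi := fun a => drop (size (f [:: i])) (f (i :: a)).
exists fi; split => //; split.
- move=> a Ha; apply/addr_subtree.
  have /addr_subtree [s Hs] := Haddr _ (Hc _ Ha).
  exists s; move: Hs; rewrite (Hdec _ Ha) subtree_cat Hs2 //.
- move=> a b Ha Hb E.
  have : f (i :: a) = f (i :: b) by rewrite (Hdec _ Ha) (Hdec _ Hb); congr (_ ++ _); exact: E.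
  by move/(Hinj _ _ (Hc _ Ha) (Hc _ Hb)) => [].
- by rewrite /fi drop_size.
- move=> a Ha Hl.
  have := Hleaf _ (Hc _ Ha); rewrite /= Hi => /(_ Hl).
  by rewrite (Hdec _ Ha) subtree_cat Hs2.
- move=> a b Ha Hb.
  have := Hpre _ _ (Hc _ Ha) (Hc _ Hb); rewrite (Hdec _ Ha) (Hdec _ Hb) => H.
  have := prefix_cons i a b; have := prefix_cat (f [:: i]) (fi a) (fi b).
  tauto.
Qed.
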